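(* If $G$ is a graph and $v\in V(G)$, then $St_{dom}(G)\le St_{dom}(G-v)+1$.
   Context: A dominated coloring of a graph is a proper coloring in which every color class is dominated by at least one vertex, i.e. for each color class $C$ there is a vertex adjacent to every vertex of $C$; $\chi_{dom}(G)$ is the minimum number of colors in a dominated coloring. The dom-stability $St_{dom}(G)$ is the minimum number of vertices of $G$ whose removal changes the dominated chromatic number of $G$. *)

(* Defs.v *)
(* A finite simple graph is a symmetric irreflexive relation
   e on a finType T; we work with induced subgraphs G[V] for V : {set T},
   so that vertex deletion keeps the same vertex type. *)
From mathcomp Require Import all_boot.
Set Implicit Arguments. Unset Strict Implicit. Unset Printing Implicit Defensive.

Section DomColoring.
Variables (T : finType) (e : rel T).

Definition proper_col (V : {set T}) (c : T -> nat) : Prop :=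
  forall x y, x \in V -> y \in V -> e x y -> c x <> c y.

Definition dom_coloring (V : {set T}) (k : nat) (c : T -> nat) : Prop :=
  [/\ proper_col V c,
      (forall x, x \in V -> c x < k) &
      (forall i, i < k -> (exists x, x \in V /\ c x = i) ->
         exists u, u \in V /\ (forall x, x \in V -> c x = i -> e u x))].

Definition is_chi_dom (V : {set T}) (k : nat) : Prop :=
  (exists c, dom_coloring V k c) /\
  (forall j, j < k -> ~ exists c, dom_coloring V j c).

Definition dom_changes (V X : {set T}) : Prop :=
  exists k, ~ (is_chi_dom V k <-> is_chi_dom (V :\: X) k).

Definition is_St_dom (V : {set T}) (s : nat) : Prop :=
  (exists X : {set T}, [/\ X \subset V, #|X| = s & dom_changes V X]) /\
  (forall X : {set T}, X \subset V -> dom_changes V X -> s <= #|X|).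

End DomColoring.

(* Main.v *)
Require Import Defs.
From mathcomp Require Import all_boot.
From Stdlib Require Import Classical.

Lemma min_St (T : finType) (e : rel T) (m : nat) :
  (exists X : {set T}, [/\ X \subset [set: T], #|X| = m & dom_changes e [set: T] X]) ->
  exists s', is_St_dom e [set: T] s' /\ s' <= m.
Proof.
elim: m {-2}m (leqnn m) => [|n IH] m Hm HP.
  exists m; split => //; split => // X _ _; rewrite leqn0 in Hm; by rewrite (eqP Hm).
case: (classic (exists j, j < m /\ exists X : {set T},
   [/\ X \subset [set: T], #|X| = j & dom_changes e [set: T] X])).
  move=> [j [Hj HPj]].
  have [s' [Hs' Hle]] := IH j (leq_trans Hj Hm : j <= n) HPj.
  exists s'; split => //; exact: leq_trans Hle (ltnW Hj).
move=> Hno; exists m; split => //; split => // X _ HX.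
rewrite leqNgt; apply/negP => Hlt; apply: Hno; exists #|X|; split => //.
by exists X; split => //; exact: subsetT.
Qed.

Theorem mainTheorem12 (T : finType) (e : rel T)
  (e_sym : symmetric e) (e_irr : irreflexive e) (v : T) (s : nat) :
  is_St_dom e ([set: T] :\ v) s ->
  exists s', is_St_dom e [set: T] s' /\ s' <= s + 1.
Proof.
move=> [[X [HXsub HXcard [k Hk]]] _].
case: (classic (forall j, is_chi_dom e [set: T] j <->
                 is_chi_dom e ([set: T] :\ v) j)) => HAB.
  have HX' : dom_changes e [set: T] (v |: X).
    exists k => Hiff; apply: Hk; rewrite -setDDl in Hiff.
    by split => H; [apply/Hiff/HAB | apply/HAB/Hiff].
  have [s' [Hs' Hle]] := @min_St T e _ (ex_intro _ (v |: X) (And3 (subsetT _) erefl HX')).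
  exists s'; split => //; apply: leq_trans Hle _.
  by rewrite cardsU1 HXcard addnC leq_add2l leq_b1.
have HX' : dom_changes e [set: T] [set v].
  apply: NNPP => Hn; apply: HAB => j; apply: NNPP => Hj; apply: Hn; by exists j.
have [s' [Hs' Hle]] := @min_St T e _ (ex_intro _ [set v] (And3 (subsetT _) erefl HX')).
exists s'; split => //; apply: leq_trans Hle _; by rewrite cards1 addn1.
Qed.
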